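(* In the setting of the context, assume that $P_1,P_2,P_m$ are Poisson distributions with parameters $\lambda_1,\lambda_2,\lambda_m>0$ respectively, that the thresholds depend only on the total number of neighbours, $K_j(a,b)=K_j(a+b)$, and that the seeding depends only on the total number of neighbours, $\alpha_j(a,b)=\alpha_j(a+b)$, for $j\in\{1,2\}$. Then the solution $\boldsymbol{\mu}(t)$ of $\frac{d\boldsymbol{\mu}}{dt}=F(\boldsymbol{\mu})-\boldsymbol{\mu}$, $\boldsymbol{\mu}(0)=(1,1,1,1)$, satisfies $\mu^{(1,1)}(t)=\mu^{(2,1)}(t)$ and $\mu^{(2,2)}(t)=\mu^{(1,2)}(t)$ for all $t\ge0$, so that the dimension of the differential equations reduces to $2$.
   Context: Two-community threshold adoption model. $P_1,P_2,P_m$ are probability distributions on $\mathbb{Z}_{\ge 0}$ with finite means $\lambda_1,\lambda_2,\lambda_m>0$: $P_j$ is the degree distribution inside community $j\in\{1,2\}$, $P_m$ that of links between communities. For $j\in\{1,2\}$, $-j$ denotes the other community. $K_j(a,b)\ge0$ is the threshold of a node of community $j$ with $a$ neighbours in its own and $b$ in the other community; $\alpha_j(a,b)\in[0,1]$ is its seeding probability. $Bi(k;n,p)=\binom nk p^k(1-p)^{n-k}$. Vectors $\boldsymbol{\mu}=(\mu^{(1,1)},\mu^{(1,2)},\mu^{(2,1)},\mu^{(2,2)})\in[0,1]^4$. $F:[0,1]^4\to[0,1]^4$ has components, for $j\in\{1,2\}$, $$F_{(j,j)}(\boldsymbol{\mu})=\sum_{a\ge1,b\ge0}\frac{aP_j(a)}{\lambda_j}P_m(b)(1-\alpha_j(a,b))\sum_{\substack{0\le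 u\le a-1,\ 0\le v\le b\\ u+v<K_j(a,b)}}Bi(u;a-1,1-\mu^{(j,j)})\,Bi(v;b,1-\mu^{(j,-j)}),$$ $$F_{(j,-j)}(\boldsymbol{\mu})=\sum_{a\ge0,b\ge1}P_{-j}(a)\frac{bP_m(b)}{\lambda_m}(1-\alpha_{-j}(a,b))\sum_{\substack{0\le u\le a,\ 0\le v\le b-1\\ u+v<K_{-j}(a,b)}}Bi(u;a,1-\mu^{(-j,-j)})\,Bi(v;b-1,1-\mu^{(-j,j)}).$$ The ODE $\dot{\boldsymbol{\mu}}=F(\boldsymbol{\mu})-\boldsymbol{\mu}$ started at $(1,1,1,1)$ describes (up to time change) the evolution of the adoption cascade. *)

(* Defs.v *)
From Stdlib Require Import Reals Lra Arith.
From Coquelicot Require Import Coquelicot.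
Open Scope R_scope.

Inductive comm : Type := Comm1 | Comm2.

Definition other (j : comm) : comm := match j with Comm1 => Comm2 | Comm2 => Comm1 end.

Definition Bi (k n : nat) (p : R) : R :=
  Binomial.C n k * p ^ k * (1 - p) ^ (n - k).

Definition poisson (lam : R) (k : nat) : R :=
  exp (- lam) * lam ^ k / INR (fact k).

Definition thr_sum (n m K : nat) (p q : R) : R :=
  sum_n (fun u => sum_n (fun v =>
     if (u + v <? K)%nat then Bi u n p * Bi v m q else 0) m) n.

(* A state mu : comm -> comm -> R, with  mu j k = mu^{(j,k)}.
   Model parameters:
     P j   : degree distribution inside community j (mean lam j),
     Pm    : degree distribution of links between communities (mean lamm),
     K j a b     : threshold of a node of community j with a own / b other neighbours,
     alpha j a b : seeding probability of such a node. *)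

Definition F_same (P : comm -> nat -> R) (Pm : nat -> R) (lam : comm -> R)
    (K : comm -> nat -> nat -> nat) (alpha : comm -> nat -> nat -> R)
    (mu : comm -> comm -> R) (j : comm) : R :=
  Series (fun a => Series (fun b =>
    if (a =? 0)%nat then 0 else
    INR a * P j a / lam j * Pm b * (1 - alpha j a b)
      * thr_sum (a - 1) b (K j a b) (1 - mu j j) (1 - mu j (other j)))).

Definition F_cross (P : comm -> nat -> R) (Pm : nat -> R) (lamm : R)
    (K : comm -> nat -> nat -> nat) (alpha : comm -> nat -> nat -> R)
    (mu : comm -> comm -> R) (j : comm) : R :=
  Series (fun a => Series (fun b =>
    if (b =? 0)%nat then 0 else
    P (other j) a * (INR b * Pm b / lamm) * (1 - alpha (other j) a b)
      * thr_sum a (b - 1) (K (other j) a b)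
          (1 - mu (other j) (other j)) (1 - mu (other j) j))).

Definition comm_eqb (j k : comm) : bool :=
  match j, k with Comm1, Comm1 | Comm2, Comm2 => true | _, _ => false end.

Definition F (P : comm -> nat -> R) (Pm : nat -> R) (lam : comm -> R) (lamm : R)
    (K : comm -> nat -> nat -> nat) (alpha : comm -> nat -> nat -> R)
    (mu : comm -> comm -> R) (j k : comm) : R :=
  if comm_eqb j k then F_same P Pm lam K alpha mu j
  else F_cross P Pm lamm K alpha mu j.

(* Main.v *)
Require Import Defs.
From Stdlib Require Import Reals Lra Lia.
From Coquelicot Require Import Coquelicot.
Open Scope R_scope.
Lemma Series_zero : Series (fun _ => 0) = 0.
Proof. unfold Series. rewrite (Lim_seq_ext _ (fun _ => 0)). now rewrite Lim_seq_const.
intro n. induction n; [now rewrite sum_O| rewrite sum_Sn, IHn; cbn; unfold plus; cbn; lra]. Qed.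

Lemma poi_shift lam a : 0 < lam -> INR (S a) * poisson lam (S a) / lam = poisson lam a.
Proof. intro H. unfold poisson. change (Factorial.fact (S a)) with (S a * Factorial.fact a)%nat. rewrite mult_INR. simpl pow.
 assert (INR (Factorial.fact a) <> 0) by (apply not_0_INR, Factorial.fact_neq_0).
 assert (INR (S a) <> 0) by (apply not_0_INR; lia). field; lra. Qed.

Lemma F_eq lam lamm K alpha mu j : (forall j, 0 < lam j) -> 0 < lamm ->
  F_same (fun j => poisson (lam j)) (poisson lamm) lam
          (fun j a b => K j (a + b)%nat) (fun j a b => alpha j (a + b)%nat) mu j =
  F_cross (fun j => poisson (lam j)) (poisson lamm) lamm
          (fun j a b => K j (a + b)%nat) (fun j a b => alpha j (a + b)%nat) mu (other j).
Proof.
intros Hl Hm. unfold F_same, F_cross.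
rewrite Series_incr_1_aux.
2:{ simpl. apply Series_zero. }
apply Series_ext. intro a.
rewrite (Series_incr_1_aux (fun b => if (b =? 0)%nat then _ else _)) by reflexivity.
apply Series_ext. intro b. simpl Nat.eqb. cbv iota.
assert (Ho : other (other j) = j) by now destruct j.
rewrite Ho. rewrite poi_shift by auto. rewrite poi_shift by auto.
replace (S a - 1)%nat with a by lia. replace (S b - 1)%nat with b by lia.
replace (S a + b)%nat with (a + S b)%nat by lia. ring.
Qed.
Lemma ode_zero (D : R -> R) : D 0 = 0 ->
  (forall eps, 0 < eps -> exists delta, 0 < delta /\ forall s, 0 < s < delta -> Rabs (D s) < eps) ->
  (forall t, 0 < t -> is_derive D t (- D t)) -> forall t, 0 <= t -> D t = 0.
Proof.
intros H0 Hc Hd t Ht. destruct (Req_dec t 0) as [->|Htp]; [exact H0|].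
assert (Ht' : 0 < t) by lra.
set (g := fun s => D s * exp s).
assert (Hg : forall s, 0 < s -> is_derive g s 0).
{ intros s Hs. unfold g.
  evar (v : R). replace 0 with v.
  apply (is_derive_mult D exp). apply Hd; auto. apply is_derive_exp.
  intros; apply Rmult_comm.
  unfold v; simpl; unfold plus, mult; simpl. ring. }
assert (Heq : forall s, 0 < s < t -> g t = g s).
{ intros s Hs. destruct (MVT_gen g s t (fun _ => 0)) as [c [_ Hc']].
  - intros x Hx. apply Hg. rewrite Rmin_left in Hx by lra. lra.
  - intros x Hx. rewrite Rmin_left in Hx by lra. apply continuity_pt_filterlim.
    apply (ex_derive_continuous g). eexists. apply Hg. lra.
  - lra. }
destruct (Req_dec (D t) 0) as [|Hn]; [assumption|exfalso].
assert (Hpos : 0 < Rabs (D t)) by (apply Rabs_pos_lt; auto).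
destruct (Hc (Rabs (D t) / 2) ltac:(lra)) as [d [Hd0 Hds]].
set (s := Rmin (d/2) (t/2)).
assert (Hs : 0 < s < t /\ s < d).
{ unfold s. split; [split|]. apply Rmin_glb_lt; lra.
  eapply Rle_lt_trans; [apply Rmin_r|lra]. eapply Rle_lt_trans; [apply Rmin_l|lra]. }
specialize (Heq s ltac:(lra)). unfold g in Heq.
specialize (Hds s ltac:(lra)).
assert (Hexp : exp s < exp t) by (apply exp_increasing; lra).
assert (Hexp0 : 0 < exp s) by apply exp_pos.
assert (Rabs (D t * exp t) = Rabs (D s * exp s)) by now rewrite Heq.
rewrite !Rabs_mult, !(Rabs_right (exp _)) in H by (left; apply exp_pos).
assert (1 <= exp t). { rewrite <- exp_0. left. apply exp_increasing; lra. }
nra.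
Qed.

Lemma pair_eq
  (lam : comm -> R) (lamm : R)
  (Hlam : forall j, 0 < lam j) (Hlamm : 0 < lamm)
  (K : comm -> nat -> nat) (alpha : comm -> nat -> R)
  (mu : R -> comm -> comm -> R)
  (Hinit : forall j k, mu 0 j k = 1)
  (Hcont0 : forall j k, filterlim (fun s => mu s j k) (at_right 0) (locally (mu 0 j k)))
  (Hode : forall t j k, 0 < t ->
     is_derive (fun s => mu s j k) t
       (F (fun j => poisson (lam j)) (poisson lamm) lam lamm
          (fun j a b => K j (a + b)%nat) (fun j a b => alpha j (a + b)%nat)
          (mu t) j k - mu t j k)) j :
  forall t, 0 <= t -> mu t j j = mu t (other j) j.
Proof.
intros t Ht.
cut ((fun s => mu s j j - mu s (other j) j) t = 0). { simpl; lra. }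
apply ode_zero; auto.
- simpl. rewrite !Hinit. ring.
- intros eps He.
  pose proof (proj1 (filterlim_locally _ _) (Hcont0 j j) (mkposreal (eps/2) ltac:(lra))) as A.
  pose proof (proj1 (filterlim_locally _ _) (Hcont0 (other j) j) (mkposreal (eps/2) ltac:(lra))) as B.
  destruct A as [d1 A]. destruct B as [d2 B].
  exists (Rmin d1 d2). split. { apply Rmin_glb_lt; apply cond_pos. }
  intros s Hs.
  assert (Hb1 : ball 0 d1 s).
  { apply Rabs_lt_between'. pose proof (Rmin_l d1 d2). unfold minus, plus, opp; simpl. lra. }
  assert (Hb2 : ball 0 d2 s).
  { apply Rabs_lt_between'. pose proof (Rmin_r d1 d2). unfold minus, plus, opp; simpl. lra. }
  specialize (A s Hb1 ltac:(lra)). specialize (B s Hb2 ltac:(lra)).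
  rewrite Hinit in A, B.
  apply Rabs_lt_between' in A. apply Rabs_lt_between' in B. simpl in A, B.
  apply Rabs_def1; lra.
- intros s Hs.
  pose proof (Hode s j j Hs) as A. pose proof (Hode s (other j) j Hs) as B.
  pose proof (is_derive_minus _ _ _ _ _ A B) as C.
  unfold minus, plus, opp in C; simpl in C.
  replace (- (mu s j j - mu s (other j) j)) with
    ((F (fun j => poisson (lam j)) (poisson lamm) lam lamm
          (fun j a b => K j (a + b)%nat) (fun j a b => alpha j (a + b)%nat)
          (mu s) j j - mu s j j) + - (F (fun j => poisson (lam j)) (poisson lamm) lam lamm
          (fun j a b => K j (a + b)%nat) (fun j a b => alpha j (a + b)%nat)
          (mu s) (other j) j - mu s (other j) j)).
  + exact C.
  + unfold F. destruct j; simpl; rewrite (F_eq lam lamm K alpha) by auto; simpl; ring.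
Qed.

Theorem theorem9p1
  (lam : comm -> R) (lamm : R)
  (Hlam : forall j, 0 < lam j) (Hlamm : 0 < lamm)
  (K : comm -> nat -> nat)              (* K_j(a,b) = K j (a+b) *)
  (alpha : comm -> nat -> R)            (* alpha_j(a,b) = alpha j (a+b) *)
  (Halpha : forall j n, 0 <= alpha j n <= 1)
  (mu : R -> comm -> comm -> R)
  (Hinit : forall j k, mu 0 j k = 1)
  (Hrange : forall t j k, 0 <= t -> 0 <= mu t j k <= 1)
  (Hcont0 : forall j k, filterlim (fun s => mu s j k) (at_right 0) (locally (mu 0 j k)))
  (Hode : forall t j k, 0 < t ->
     is_derive (fun s => mu s j k) t
       (F (fun j => poisson (lam j)) (poisson lamm) lam lamm
          (fun j a b => K j (a + b)%nat) (fun j a b => alpha j (a + b)%nat)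
          (mu t) j k - mu t j k)) :
  forall t, 0 <= t -> mu t Comm1 Comm1 = mu t Comm2 Comm1 /\ mu t Comm2 Comm2 = mu t Comm1 Comm2.
Proof.
intros t Ht. split.
- exact (pair_eq lam lamm Hlam Hlamm K alpha mu Hinit Hcont0 Hode Comm1 t Ht).
- exact (pair_eq lam lamm Hlam Hlamm K alpha mu Hinit Hcont0 Hode Comm2 t Ht).
Qed.
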